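(* Let $T^-,T'^-\in\Omega^-$, $T^+,T'^+\in\Omega^+$, and let $X$ be a predicate variable or predicate symbol. (1) If $X$ is positive (resp. negative) in $T^-$, then $T^-[T'^-/X]\in\Omega^-$ (resp. $T^-[T'^+/X]\in\Omega^-$). (2) If $X$ is positive (resp. negative) in $T^+$, then $T^+[T'^+/X]\in\Omega^+$ (resp. $T^+[T'^-/X]\in\Omega^+$). (3) For any types $T,F$: if $T[F/X]\in\Omega^+$ (resp. $T[F/X]\in\Omega^-$), then $T\in\Omega^+$ (resp. $T\in\Omega^-$).
   Context: $TTR$ types: over a second-order language with first-order variables, function symbols, $n$-ary predicate variables and symbols; atomic $\perp$ and $X(t_1,\dots,t_n)$; constructors $\to$, $\forall x$, $\forall X$, and $\mu Cx_1\dots x_nA\langle t_1,\dots,t_n\rangle$ for $C$ an $n$-ary predicate symbol occurring and positive in $A$. Positivity: $X$ is positive and negative in $A$ if it does not occur in $A$; positive and not negative in $X(\bar t)$; positive (negative) in $B\to C$ iff negative (positive) in $B$ and positive (negative) in $C$; for $v\ne X$ positive (negative) in $\forall vB$ iff in $B$; positive (negative) in $\mu C\bar xB\langle\bar t\rangle$ iff in $B$. $T[F/X]$ denotes $T[F/X(x_1,\dots,x_n)]$: each atomic $X(t_1,\dots,t_n)$ is replaced by $F[t_1/x_1,\dots,t_n/x_n]$. $\Omega^+$ ($\forall$-positive) and $\Omega^-$ ($\forall$-negative): atomic types are in both; if $T^+\in\Omega^+$, $T^-\in\Omega^-$ then $T^-\to T^+\in\Omega^+$ and $T^+\to T^-\in\Omega^-$;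 if $T^+\in\Omega^+$ then $\forall xT^+,\forall XT^+\in\Omega^+$; if $T^-\in\Omega^-$ then $\forall xT^-\in\Omega^-$, and $\forall XT^-\in\Omega^-$ when $X$ is not free in $T^-$; if $T^+\in\Omega^+$ and $C$ is an $n$-ary predicate symbol occurring and positive in $T^+$ then $\mu Cx_1\dots x_nT^+\langle t_1,\dots,t_n\rangle\in\Omega^+$. *)

(* Defs.v *)
From Stdlib Require Import List Bool Arith.
Import ListNotations.

Inductive term : Type :=
| TVar (i : nat)
| TFun (f : nat) (args : list term).

(* Head of an atomic type: a predicate variable (de Bruijn index, in the
   predicate-variable namespace) or a predicate symbol (constant). *)
Inductive phead : Type :=
| PVar (i : nat)
| PSym (c : nat).

(* Types.
   - AllT A      : forall x A      (binds term index 0 in A)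
   - AllP n A    : forall X A      (X n-ary; binds predicate index 0 in A)
   - Mu n A ts   : mu C x_1..x_n A <ts>  (binds predicate index 0 = C and
                   term indices 0..n-1 = x_1..x_n in A; ts lie outside). *)
Inductive ty : Type :=
| Bot
| Atom (p : phead) (ts : list term)
| Arr (A B : ty)
| AllT (A : ty)
| AllP (n : nat) (A : ty)
| Mu (n : nat) (A : ty) (ts : list term).

Definition phead_eqb (p q : phead) : bool :=
  match p, q with
  | PVar i, PVar j => Nat.eqb i j
  | PSym c, PSym d => Nat.eqb c d
  | _, _ => false
  end.

Definition pshift (p : phead) : phead :=
  match p with PVar i => PVar (S i) | PSym c => PSym c end.

Fixpoint occurs (X : phead) (T : ty) : bool :=
  match T with
  | Bot => false
  | Atom p _ => phead_eqb p X
  | Arr A B => occurs X A || occurs X B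
  | AllT A => occurs X A
  | AllP _ A => occurs (pshift X) A
  | Mu _ A _ => occurs (pshift X) A
  end.

Fixpoint polar (b : bool) (X : phead) (T : ty) : bool :=
  match T with
  | Bot => true
  | Atom p _ => b || negb (phead_eqb p X)
  | Arr A B => polar (negb b) X A && polar b X B
  | AllT A => polar b X A
  | AllP _ A => polar b (pshift X) A
  | Mu _ A _ => polar b (pshift X) A
  end.

Definition positive (X : phead) (T : ty) : bool := polar true X T.
Definition negative (X : phead) (T : ty) : bool := polar false X T.

Fixpoint tsubst (s : nat -> term) (t : term) : term :=
  match t with
  | TVar i => s i
  | TFun f l => TFun f (map (tsubst s) l)
  end.

Definition tup (s : nat -> term) : nat -> term :=
  fun i => match i with
           | 0 => TVar 0
           | S i' => tsubst (fun k => TVar (S k)) (s i')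
           end.

Definition tupn (n : nat) (s : nat -> term) : nat -> term := Nat.iter n tup s.

Definition pup (r : nat -> nat) : nat -> nat :=
  fun i => match i with 0 => 0 | S i' => S (r i') end.

Definition prename (r : nat -> nat) (p : phead) : phead :=
  match p with PVar i => PVar (r i) | PSym c => PSym c end.

Fixpoint tymap (s : nat -> term) (r : nat -> nat) (T : ty) : ty :=
  match T with
  | Bot => Bot
  | Atom p ts => Atom (prename r p) (map (tsubst s) ts)
  | Arr A B => Arr (tymap s r A) (tymap s r B)
  | AllT A => AllT (tymap (tup s) r A)
  | AllP n A => AllP n (tymap s (pup r) A)
  | Mu n A ts => Mu n (tymap (tupn n s) (pup r) A) (map (tsubst s) ts)
  end.

(* Instantiation F[t_1/x_1,...,t_n/x_n] placed at a position of T under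
   k term binders and j predicate binders.  In F, term indices 0..n-1 are
   the parameters x_1..x_n, index n+m is the free term variable m of the
   ambient context; free predicate variables of F are those of the
   ambient context. *)
Definition inst (n k j : nat) (F : ty) (ts : list term) : ty :=
  tymap (fun i => if i <? n then nth i ts (TVar 0) else TVar (i - n + k))
        (fun i => i + j) F.

Definition pliftn (j : nat) (X : phead) : phead :=
  match X with PVar i => PVar (i + j) | PSym c => PSym c end.

Fixpoint subst_go (X : phead) (n : nat) (F : ty) (k j : nat) (T : ty) : ty :=
  match T with
  | Bot => Bot
  | Atom p ts => if phead_eqb p (pliftn j X) then inst n k j F ts else Atom p ts
  | Arr A B => Arr (subst_go X n F k j A) (subst_go X n F k j B)
  | AllT A => AllT (subst_go X n F (S k) j A)
  | AllP m A => AllP m (subst_go X n F k (S j) A)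
  | Mu m A ts => Mu m (subst_go X n F (m + k) (S j) A) ts
  end.

Definition subst (X : phead) (n : nat) (F : ty) (T : ty) : ty :=
  subst_go X n F 0 0 T.

Inductive OmegaP : ty -> Prop :=
| OP_bot : OmegaP Bot
| OP_atom p ts : OmegaP (Atom p ts)
| OP_arr A B : OmegaN A -> OmegaP B -> OmegaP (Arr A B)
| OP_allT A : OmegaP A -> OmegaP (AllT A)
| OP_allP n A : OmegaP A -> OmegaP (AllP n A)
| OP_mu n A ts : OmegaP A -> occurs (PVar 0) A = true ->
    positive (PVar 0) A = true -> OmegaP (Mu n A ts)
with OmegaN : ty -> Prop :=
| ON_bot : OmegaN Bot
| ON_atom p ts : OmegaN (Atom p ts)
| ON_arr A B : OmegaP A -> OmegaN B -> OmegaN (Arr A B)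
| ON_allT A : OmegaN A -> OmegaN (AllT A)
| ON_allP n A : OmegaN A -> occurs (PVar 0) A = false -> OmegaN (AllP n A).

(* Main.v *)
Require Import Defs.
From Stdlib Require Import List Bool Arith Lia.

Definition Om (b : bool) (T : ty) : Prop := if b then OmegaP T else OmegaN T.

Lemma polar_nocc : forall T Y b, occurs Y T = false -> polar b Y T = true.
Proof.
  induction T; intros Y b H; simpl in *; auto.
  - rewrite H. now destruct b.
  - apply orb_false_iff in H as [H1 H2]. now rewrite IHT1, IHT2.
Qed.

Lemma peqb_ren : forall r p Y, (forall x y, r x = r y -> x = y) ->
  phead_eqb (prename r p) (prename r Y) = phead_eqb p Y.
Proof.
  intros r [i|c] [i'|c'] Hr; simpl; auto.
  destruct (Nat.eqb_spec i i'); destruct (Nat.eqb_spec (r i) (r i')); subst; auto.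
  apply Hr in e; congruence.
Qed.

Lemma pup_inj : forall r, (forall x y, r x = r y -> x = y) ->
  forall x y, pup r x = pup r y -> x = y.
Proof. intros r Hr [|x] [|y]; simpl; intros H; try congruence.
  injection H; intro; f_equal; auto. Qed.

Lemma pshift_ren : forall r Y, pshift (prename r Y) = prename (pup r) (pshift Y).
Proof. intros r [i|c]; reflexivity. Qed.

Lemma ren_occ : forall T s r Y, (forall x y, r x = r y -> x = y) ->
  occurs (prename r Y) (tymap s r T) = occurs Y T /\
  forall b, polar b (prename r Y) (tymap s r T) = polar b Y T.
Proof.
  induction T; intros s r Y Hr; simpl; auto.
  - rewrite peqb_ren; auto.
  - destruct (IHT1 s r Y Hr) as [A1 B1]; destruct (IHT2 s r Y Hr) as [A2 B2].
    split; [congruence|]; intro b; now rewrite B1, B2.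
  - rewrite pshift_ren. apply IHT. apply pup_inj; auto.
  - rewrite pshift_ren. apply IHT. apply pup_inj; auto.
Qed.

Lemma ren_omega : forall T s r, (forall x y, r x = r y -> x = y) ->
  (OmegaP T -> OmegaP (tymap s r T)) /\ (OmegaN T -> OmegaN (tymap s r T)).
Proof.
  induction T; intros s r Hr; simpl; split; intro H; inversion H; subst.
  - constructor.
  - constructor.
  - constructor.
  - constructor.
  - constructor; [apply IHT1|apply IHT2]; auto.
  - constructor; [apply IHT1|apply IHT2]; auto.
  - constructor; apply IHT; auto.
  - constructor; apply IHT; auto.
  - constructor; apply IHT; auto; apply pup_inj; auto.
  - constructor. apply IHT; auto; apply pup_inj; auto.
    destruct (ren_occ T s (pup r) (PVar 0) (pup_inj r Hr)) as [E _].
    simpl in E. rewrite E; auto.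
  - constructor. apply IHT; auto; apply pup_inj; auto.
    destruct (ren_occ T (tupn n s) (pup r) (PVar 0) (pup_inj r Hr)) as [E _].
    simpl in E. rewrite E; auto.
    destruct (ren_occ T (tupn n s) (pup r) (PVar 0) (pup_inj r Hr)) as [_ E].
    simpl in E. unfold positive in *. rewrite E; auto.
Qed.

Lemma nocc_tymap : forall F s r i, (forall x, r x <> i) ->
  occurs (PVar i) (tymap s r F) = false.
Proof.
  induction F; intros s r i Hr; simpl; auto.
  - destruct p; simpl; auto. apply Nat.eqb_neq; auto.
  - rewrite IHF1, IHF2; auto.
  - apply IHF. intros [|x]; simpl; auto.
  - apply IHF. intros [|x]; simpl; auto.
Qed.

Lemma peqb_lift : forall (X : phead) p j i, i < j ->
  phead_eqb p (pliftn j X) = true -> phead_eqb p (PVar i) = false.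
Proof.
  intros X [a|c] j i Hij; destruct X as [x|d]; simpl; intro H; auto; try discriminate.
  apply Nat.eqb_eq in H. apply Nat.eqb_neq. lia.
Qed.

Lemma subst_occ : forall X n F T k j i, i < j ->
  occurs (PVar i) (subst_go X n F k j T) = occurs (PVar i) T /\
  forall b, polar b (PVar i) (subst_go X n F k j T) = polar b (PVar i) T.
Proof.
  intros X n F; induction T; intros k j i Hij; simpl; auto.
  - destruct (phead_eqb p (pliftn j X)) eqn:E; simpl; auto.
    rewrite (peqb_lift X p j i Hij E).
    assert (N : occurs (PVar i) (inst n k j F ts) = false).
    { unfold inst. apply nocc_tymap. intro; lia. }
    split; auto. intro b. rewrite polar_nocc; auto. now destruct b.
  - destruct (IHT1 k j i Hij) as [A1 B1]; destruct (IHT2 k j i Hij) as [A2 B2].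
    split; [congruence|]; intro b; now rewrite B1, B2.
  - apply IHT; lia.
  - apply IHT; lia.
Qed.

Lemma subst_back : forall X n F T k j,
  (OmegaP (subst_go X n F k j T) -> OmegaP T) /\
  (OmegaN (subst_go X n F k j T) -> OmegaN T).
Proof.
  intros X n F; induction T; intros k j; simpl; split; intro H;
    try constructor; try (destruct (phead_eqb p (pliftn j X)); constructor);
    inversion H; subst; try (now apply (IHT1 k j)); try (now apply (IHT2 k j));
    try (now apply (IHT (S k) j)); try (now apply (IHT k (S j)));
    try (now apply (IHT (n0 + k) (S j))).
  - destruct (subst_occ X n F T k (S j) 0 ltac:(lia)) as [E _]. congruence.
  - destruct (subst_occ X n F T (n0 + k) (S j) 0 ltac:(lia)) as [E _]. congruence.
  - destruct (subst_occ X n F T (n0 + k) (S j) 0 ltac:(lia)) as [_ E].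
    unfold positive in *. rewrite <- E. auto.
Qed.

Lemma pshift_lift : forall (X : phead) j, pshift (pliftn j X) = pliftn (S j) X.
Proof. intros [x|c] j; simpl; f_equal; lia. Qed.

Lemma main : forall X n F T k j b c, Om b T ->
  polar c (pliftn j X) T = true ->
  Om (if c then b else negb b) F ->
  Om b (subst_go X n F k j T).
Proof.
  intros X n F; induction T; intros k j b c HT Hp HF; simpl in *.
  - exact HT.
  - destruct (phead_eqb p (pliftn j X)) eqn:E.
    + destruct c; simpl in Hp; [|discriminate].
      unfold inst. destruct b; simpl in *; apply ren_omega; auto; intros; lia.
    + exact HT.
  - apply andb_true_iff in Hp as [H1 H2].
    destruct b; simpl in *; inversion HT; subst; constructor.
    + apply (IHT1 k j false (negb c)); auto. destruct c; auto.
    + apply (IHT2 k j true c); auto.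
    + apply (IHT1 k j true (negb c)); auto. destruct c; auto.
    + apply (IHT2 k j false c); auto.
  - destruct b; simpl in *; inversion HT; subst; constructor;
      [apply (IHT (S k) j true c) | apply (IHT (S k) j false c)]; auto.
  - rewrite pshift_lift in Hp.
    destruct b; simpl in *; inversion HT; subst; constructor.
    + apply (IHT k (S j) true c); auto.
    + apply (IHT k (S j) false c); auto.
    + destruct (subst_occ X n F T k (S j) 0 ltac:(lia)) as [E _]. congruence.
  - rewrite pshift_lift in Hp.
    destruct b; simpl in *; inversion HT; subst; constructor.
    + apply (IHT (n0 + k) (S j) true c); auto.
    + destruct (subst_occ X n F T (n0 + k) (S j) 0 ltac:(lia)) as [E _]. congruence.
    + destruct (subst_occ X n F T (n0 + k) (S j) 0 ltac:(lia)) as [_ E].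
      unfold positive in *. rewrite E. auto.
Qed.

Lemma pliftn0 : forall X : phead, pliftn 0 X = X.
Proof. intros [x|c]; simpl; f_equal; lia. Qed.

Theorem lemma5p1 (X : phead) (n : nat) :
  (* (1) *)
  (forall Tm T'm, OmegaN Tm -> OmegaN T'm -> positive X Tm = true ->
     OmegaN (subst X n T'm Tm)) /\
  (forall Tm T'p, OmegaN Tm -> OmegaP T'p -> negative X Tm = true ->
     OmegaN (subst X n T'p Tm)) /\
  (* (2) *)
  (forall Tp T'p, OmegaP Tp -> OmegaP T'p -> positive X Tp = true ->
     OmegaP (subst X n T'p Tp)) /\
  (forall Tp T'm, OmegaP Tp -> OmegaN T'm -> negative X Tp = true ->
     OmegaP (subst X n T'm Tp)) /\
  (* (3) *)
  (forall T F, OmegaP (subst X n F T) -> OmegaP T) /\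
  (forall T F, OmegaN (subst X n F T) -> OmegaN T).
Proof.
  unfold subst, positive, negative.
  repeat split; intros.
  - apply (main X n T'm Tm 0 0 false true); auto. rewrite pliftn0; auto.
  - apply (main X n T'p Tm 0 0 false false); auto. rewrite pliftn0; auto.
  - apply (main X n T'p Tp 0 0 true true); auto. rewrite pliftn0; auto.
  - apply (main X n T'm Tp 0 0 true false); auto. rewrite pliftn0; auto.
  - eapply subst_back; eauto.
  - eapply subst_back; eauto.
Qed.
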